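(* Let $k\ge 2$, $n=2^k$, and run Jakobsson's pebble-update procedure. Then the pebbles with initial labels $1,\dots,k-1$ are each eventually discarded, and they are discarded in the reverse order of their initial labels: first the pebble with label $k-1$, then the one with label $k-2$, and so on, down to the pebble with label $1$.
   Context: Jakobsson's pebble-update procedure (hash-chain preimage traversal). Fix $k\ge 1$ and $n=2^k$. There are $k$ pebbles, identified by their initial label $j\in\{1,\dots,k\}$; the pebble with label $k$ sits at the seed of the hash chain. Pebble $j$ has two fixed constants $S_j=3\cdot 2^j$ (start increment) and $D_j=2^{j+1}$ (destination increment), and two integer fields $\mathrm{Position}$ and $\mathrm{Destination}$ (which may be set to $+\infty$). Initially $\mathrm{Position}=\mathrm{Destination}=2^j$ for pebble $j$, and a counter $c$ equals $0$. The pebbles are kept sorted by $\mathrm{Position}$, and ''the first pebble'' means the pebble with the smallest $\mathrm{Position}$. One step: (i) if $c=n$, stop; otherwise $c\leftarrow c+1$; (ii) for every pebble with $\mathrm{Position}\ne\mathrm{Destination}$, set $\mathrm{Position}\leftarrow\mathrm{Position}-2$; (iii) if $c$ is even, the first pebble (say with initial label $j$) makes a backward move: $\mathrm{Position}\leftarrow \mathrm{Position}+S_j$, $\mathrm{Destination}\leftarrow\mathrm{Destination}+D_j$; if the new Destination exceeds $n$, both fields are set to $+\infty$ and the pebble is said to be discarded; then the pebbles are re-sorted by $\mathrm{Position}$. (Each pebble also stores a hash-chain value, which does not influence the evolution of the Position and Destination fields.) *)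

(* Defs.v *)
From Stdlib Require Import ZArith List Arith.
Import ListNotations.
Open Scope Z_scope.

(* Extended integers: [None] stands for +infinity. *)
Definition xZ := option Z.

Record state := mkState {
  cnt : nat;
  pos : nat -> xZ;          (* Position of the pebble with initial label j *)
  dst : nat -> xZ
}.

Definition xeqb (a b : xZ) : bool :=
  match a, b with
  | Some x, Some y => Z.eqb x y
  | None, None => true
  | _, _ => false
  end.

Definition xltb (a b : xZ) : bool :=
  match a, b with
  | Some x, Some y => Z.ltb x y
  | Some _, None => true
  | None, _ => false
  end.

Definition xadd (a : xZ) (d : Z) : xZ :=
  match a with Some x => Some (x + d) | None => None end.

Definition S_inc (j : nat) : Z := 3 * 2 ^ Z.of_nat j.
Definition D_inc (j : nat) : Z := 2 ^ Z.of_nat (S j).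

Definition init (k : nat) : state :=
  mkState 0%nat (fun j => Some (2 ^ Z.of_nat j)) (fun j => Some (2 ^ Z.of_nat j)).

(* The first pebble: label in 1..k with the smallest Position;
   ties (which never occur among finite positions) broken by smallest label. *)
Definition first_pebble (k : nat) (p : nat -> xZ) : nat :=
  fold_left (fun best j => if xltb (p j) (p best) then j else best)
            (seq 2 (k - 1)) 1%nat.

Definition step (k : nat) (s : state) : state :=
  let n := (2 ^ k)%nat in
  if Nat.eqb (cnt s) n then s else
  let c := S (cnt s) in
  let p1 := fun j => if xeqb (pos s j) (dst s j) then pos s j else xadd (pos s j) (-2) in
  if Nat.even c then
    let j0 := first_pebble k p1 in
    let nd := xadd (dst s j0) (D_inc j0) in
    let exceeds := match nd with Some d => Z.ltb (Z.of_nat n) d | None => true end in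
    let np := if exceeds then None else xadd (p1 j0) (S_inc j0) in
    let nd' := if exceeds then None else nd in
    mkState c (fun j => if Nat.eqb j j0 then np else p1 j)
              (fun j => if Nat.eqb j j0 then nd' else dst s j)
  else mkState c p1 (dst s).

Definition run (k t : nat) : state := Nat.iter t (step k) (init k).

Definition discarded (s : state) (j : nat) : Prop := dst s j = None.

(* Main.v *)
Require Import Defs.
From Stdlib Require Import ZArith List Arith Lia.
Open Scope Z_scope.

Definition ee (j:nat) : Z := 2 ^ Z.of_nat j.
Definition DD (t:Z) (j:nat) : Z := 2*ee j * ((t + ee j) / (2*ee j)) + ee j.
Definition PP (t:Z) (j:nat) : Z := DD t j + Z.max 0 (2*DD t j - 2*t - 3*ee j).
Definition NN (k:nat) : Z := 2 ^ Z.of_nat k.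

Lemma ee_pos j : 0 < ee j.
Proof. unfold ee. apply Z.pow_pos_nonneg; lia. Qed.

Lemma ee_S j : ee (S j) = 2 * ee j.
Proof. unfold ee. rewrite Nat2Z.inj_succ, Z.pow_succ_r; lia. Qed.

Lemma ee_half j : (1 <= j)%nat -> exists h, ee j = 2*h /\ 0 < h.
Proof. intros. destruct j as [|j]; [lia|]. exists (ee j). rewrite ee_S. pose proof (ee_pos j); lia. Qed.

Lemma DD_bounds t j : exists q, DD t j = 2*ee j*q + ee j /\ 2*ee j*q <= t + ee j < 2*ee j*q + 2*ee j.
Proof.
  pose proof (ee_pos j). exists ((t + ee j) / (2*ee j)). split; [reflexivity|].
  pose proof (Z.div_mod (t+ee j) (2*ee j) ltac:(lia)).
  pose proof (Z.mod_pos_bound (t+ee j) (2*ee j) ltac:(lia)). lia.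
Qed.

Lemma DD_gt t j : t < DD t j.
Proof. destruct (DD_bounds t j) as [q [H1 H2]]. lia. Qed.

Lemma DD_even t j : (1 <= j)%nat -> exists w, DD t j = 2*w.
Proof. intros Hj. destruct (ee_half j Hj) as [h [Hh _]].
  destruct (DD_bounds t j) as [q [H1 H2]]. exists (ee j * q + h). lia. Qed.

Lemma DD_nomove t j : DD t j <> t+1 -> DD (t+1) j = DD t j.
Proof.
  intros H. pose proof (ee_pos j).
  destruct (DD_bounds t j) as [q [H1 H2]].
  unfold DD in *. set (e := ee j) in *.
  assert (Hq : (t + e)/(2*e) = q).
  { symmetry. apply (Z.div_unique _ _ _ (t+e - 2*e*q)); lia. }
  assert (Hq' : (t + 1 + e)/(2*e) = q).
  { symmetry. apply (Z.div_unique _ _ _ (t+1+e - 2*e*q)); [|lia].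
    left. rewrite Hq in H. lia. }
  rewrite Hq, Hq'. reflexivity.
Qed.

Lemma DD_move t j : DD t j = t+1 -> DD (t+1) j = DD t j + 2 * ee j.
Proof.
  intros H. pose proof (ee_pos j).
  destruct (DD_bounds t j) as [q [H1 H2]].
  unfold DD in *. set (e := ee j) in *.
  assert (Hq : (t + e)/(2*e) = q).
  { symmetry. apply (Z.div_unique _ _ _ (t+e - 2*e*q)); lia. }
  assert (Hq' : (t + 1 + e)/(2*e) = q+1).
  { symmetry. apply (Z.div_unique _ _ _ 0); [lia|].
    rewrite Hq in H. lia. }
  rewrite Hq, Hq'. ring.
Qed.

Lemma decomp (n : nat) : forall c, 0 < c <= Z.of_nat n -> exists a m, 0 <= m /\ c = ee a * (2*m+1).
Proof.
  induction n as [|n IH]; intros c Hc; [lia|].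
  pose proof (Z.div_mod c 2 ltac:(lia)).
  pose proof (Z.mod_pos_bound c 2 ltac:(lia)).
  destruct (Z.eq_dec (c mod 2) 1) as [E|E].
  - exists 0%nat, (c/2). change (ee 0) with 1. split; [apply Z.div_pos; lia|]. lia.
  - destruct (IH (c/2) ltac:(lia)) as [a [m [Hm Hc']]].
    exists (S a), m. split; [lia|]. rewrite ee_S. lia.
Qed.

Lemma exists_mover k c : 0 < c <= NN k -> (exists u, c = 2*u) ->
  exists j, (1 <= j <= k)%nat /\ DD (c-1) j = c.
Proof.
  intros Hc [u Hu].
  destruct (decomp (Z.to_nat c) c ltac:(lia)) as [a [m [Hm Ha]]].
  pose proof (ee_pos a).
  destruct a as [|a].
  { change (ee 0) with 1 in Ha. lia. }
  exists (S a). split; [split; [lia|]|].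
  - destruct (Nat.le_gt_cases (S a) k) as [Hl|Hl]; [exact Hl|].
    exfalso. assert (NN k < ee (S a)).
    { unfold NN, ee. apply Z.pow_lt_mono_r; lia. }
    assert (ee (S a) <= c) by nia. lia.
  - unfold DD. set (e := ee (S a)) in *.
    assert (Hq : (c - 1 + e)/(2*e) = m).
    { symmetry. apply (Z.div_unique _ _ _ (2*e-1)); lia. }
    rewrite Hq. lia.
Qed.

Lemma ee_split i j : (i < j)%nat -> exists w, ee j = 2 * ee i * w.
Proof.
  intros H. exists (2 ^ Z.of_nat (j - i - 1)).
  unfold ee. rewrite <- Z.pow_succ_r by lia.
  rewrite <- Z.pow_add_r by lia. f_equal. lia.
Qed.

Lemma mover_unique_lt t i j : (i < j)%nat -> (1 <= i)%nat -> DD t i = t+1 -> DD t j = t+1 -> False.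
Proof.
  intros Hij Hi Hdi Hdj.
  destruct (ee_split i j Hij) as [w Hw].
  destruct (DD_bounds t i) as [qi [Hi1 _]].
  destruct (DD_bounds t j) as [qj [Hj1 _]].
  pose proof (ee_pos i).
  assert (E : ee i * (2*qi+1) = ee i * (2*(w*(2*qj+1)))).
  { rewrite Hw in Hj1. nia. }
  apply Z.mul_reg_l in E; lia.
Qed.

Lemma mover_unique t i j : (1 <= i)%nat -> (1 <= j)%nat -> DD t i = t+1 -> DD t j = t+1 -> i = j.
Proof.
  intros Hi Hj Ha Hb. destruct (Nat.lt_total i j) as [Hc|[Hc|Hc]]; auto; exfalso.
  - eapply mover_unique_lt with (i:=i) (j:=j); eauto.
  - eapply mover_unique_lt with (i:=j) (j:=i); eauto.
Qed.

Lemma xltb_irr a : xltb a a = false.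
Proof. destruct a; simpl; auto. apply Z.ltb_irrefl. Qed.

Lemma xltb_asym a b : xltb a b = true -> xltb b a = false.
Proof. destruct a, b; simpl; auto; try discriminate.
  intros H. apply Z.ltb_lt in H. apply Z.ltb_ge. lia. Qed.

Lemma fold_spec (p : nat -> xZ) j0 l b :
  (b = j0 \/ In j0 l) ->
  (forall x, (x = b \/ In x l) -> x <> j0 -> xltb (p j0) (p x) = true) ->
  fold_left (fun best j => if xltb (p j) (p best) then j else best) l b = j0.
Proof.
  revert b. induction l as [|a l IH]; intros b H1 H2; simpl.
  - destruct H1 as [H1|H1]; [auto|destruct H1].
  - apply IH.
    + destruct (Nat.eq_dec a j0) as [E|E].
      * subst. destruct (xltb (p j0) (p b)) eqn:Eb; auto.
        destruct (Nat.eq_dec b j0) as [Eq|Ne]; auto.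
        rewrite (H2 b (or_introl eq_refl) Ne) in Eb. discriminate.
      * destruct H1 as [H1|[H1|H1]]; try congruence.
        -- subst. rewrite (xltb_asym _ _ (H2 a (or_intror (or_introl eq_refl)) E)). auto.
        -- destruct (xltb (p a) (p b)); auto.
    + intros x Hx Hne. destruct Hx as [Hx|Hx].
      * destruct (xltb (p a) (p b)); subst; apply H2; simpl; auto.
      * apply H2; simpl; auto.
Qed.

Lemma fp_spec k p j0 : (1 <= j0 <= k)%nat ->
  (forall j, (1 <= j <= k)%nat -> j <> j0 -> xltb (p j0) (p j) = true) ->
  first_pebble k p = j0.
Proof.
  intros Hj H. unfold first_pebble. apply fold_spec.
  - destruct (Nat.eq_dec j0 1); [left; lia|right]. apply in_seq. lia.
  - intros x Hx Hne. apply H; auto. destruct Hx as [Hx|Hx]; [lia|]. apply in_seq in Hx. lia.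
Qed.

Definition predj (N t : Z) (j : nat) (px dx : xZ) : Prop :=
  if Z.ltb N (DD t j) then px = None /\ dx = None
  else px = Some (PP t j) /\ dx = Some (DD t j).

Definition inv k (t : nat) (s : state) : Prop :=
  cnt s = t /\ forall j, (1 <= j <= k)%nat -> predj (NN k) (Z.of_nat t) j (pos s j) (dst s j).

Definition p1f (px dx : xZ) : xZ := if xeqb px dx then px else xadd px (-2).

Lemma p1_nomove N t j px dx : (1 <= j)%nat -> predj N t j px dx -> DD t j <> t+1 ->
  predj N (t+1) j (p1f px dx) dx.
Proof.
  intros Hj H Hn. unfold predj in *. rewrite (DD_nomove _ _ Hn).
  destruct (ee_half j Hj) as [h [Hh Hh0]].
  destruct (Z.ltb N (DD t j)); destruct H as [Hp Hd]; subst; unfold p1f, xeqb, xadd; auto.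
  split; auto. unfold PP. rewrite (DD_nomove _ _ Hn).
  destruct (Z.eqb_spec (DD t j + Z.max 0 (2 * DD t j - 2 * t - 3 * ee j)) (DD t j)); f_equal; lia.
Qed.

Lemma p1_move N t j px dx : (1 <= j)%nat -> predj N t j px dx -> DD t j = t+1 -> t+1 <= N ->
  p1f px dx = Some (t+1) /\ dx = Some (t+1).
Proof.
  intros Hj H Hm HN. unfold predj in H.
  destruct (Z.ltb_spec N (DD t j)); [lia|]. destruct H as [Hp Hd]; subst.
  pose proof (ee_pos j).
  assert (HP : PP t j = DD t j) by (unfold PP; lia).
  unfold p1f, xeqb. rewrite HP, Z.eqb_refl. rewrite Hm. auto.
Qed.

Lemma NN_nat k : Z.of_nat (2 ^ k) = NN k.
Proof. unfold NN. rewrite Nat2Z.inj_pow. reflexivity. Qed.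

Lemma inv_init k : inv k 0 (init k).
Proof.
  split; [reflexivity|]. intros j Hj. unfold predj. change (Z.of_nat 0) with 0.
  pose proof (ee_pos j).
  assert (HD : DD 0 j = ee j).
  { unfold DD. rewrite Z.div_small by lia. lia. }
  assert (ee j <= NN k) by (unfold ee, NN; apply Z.pow_le_mono_r; lia).
  rewrite HD. destruct (Z.ltb_spec (NN k) (ee j)); [lia|].
  simpl. unfold PP. rewrite HD. split; f_equal; unfold ee; lia.
Qed.

Lemma inv_step k t s : (t < 2 ^ k)%nat -> inv k t s -> inv k (S t) (step k s).
Proof.
  intros Ht [Hc Hj]. unfold step. rewrite Hc.
  assert (E : Nat.eqb t (2^k) = false) by (apply Nat.eqb_neq; lia). rewrite E. cbv zeta.
  rewrite NN_nat.
  assert (HtN : Z.of_nat t + 1 <= NN k) by (rewrite <- NN_nat; lia).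
  replace (Z.of_nat (S t)) with (Z.of_nat t + 1) by lia.
  change (fun j => if xeqb (pos s j) (dst s j) then pos s j else xadd (pos s j) (-2))
    with (fun j => p1f (pos s j) (dst s j)).
  destruct (Nat.even (S t)) eqn:Ev.
  - apply Nat.even_spec in Ev. destruct Ev as [u Hu].
    assert (Hpos : 0 < Z.of_nat t + 1 <= NN k) by lia.
    assert (Hev : exists w, Z.of_nat t + 1 = 2 * w) by (exists (Z.of_nat u); lia).
    destruct (exists_mover k (Z.of_nat t + 1) Hpos Hev) as [j0 [Hj0 Hm]].
    replace (Z.of_nat t + 1 - 1) with (Z.of_nat t) in Hm by lia.
    assert (Hfp : first_pebble k (fun j => p1f (pos s j) (dst s j)) = j0).
    { apply fp_spec; auto. intros j Hjk Hne.
      destruct (p1_move _ _ _ _ _ (proj1 Hj0) (Hj j0 Hj0) Hm HtN) as [-> _].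
      assert (Hn : DD (Z.of_nat t) j <> Z.of_nat t + 1).
      { intros Hx. apply Hne. eapply mover_unique; eauto; lia. }
      pose proof (p1_nomove _ _ _ _ _ (proj1 Hjk) (Hj j Hjk) Hn) as P.
      unfold predj in P. pose proof (DD_gt (Z.of_nat t) j).
      rewrite (DD_nomove _ _ Hn) in P.
      destruct (Z.ltb (NN k) (DD (Z.of_nat t) j)); destruct P as [-> _]; simpl; auto.
      apply Z.ltb_lt. unfold PP. rewrite (DD_nomove _ _ Hn). lia. }
    rewrite Hfp. split; [reflexivity|]. intros j Hjk. cbn [pos dst].
    replace (Z.of_nat (S t)) with (Z.of_nat t + 1) by lia.
    destruct (Nat.eqb_spec j j0) as [Ej|Ej].
    + subst j. destruct (p1_move _ _ _ _ _ (proj1 Hj0) (Hj j0 Hj0) Hm HtN) as [Hp Hd].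
      change (if xeqb (pos s j0) (dst s j0) then pos s j0 else xadd (pos s j0) (-2)) with (p1f (pos s j0) (dst s j0)). rewrite Hp, Hd. unfold predj. rewrite (DD_move _ _ Hm). rewrite Hm.
      unfold D_inc, S_inc. fold (ee (S j0)). rewrite ee_S. fold (ee j0). cbn [xadd].
      destruct (Z.ltb (NN k) (Z.of_nat t + 1 + 2 * ee j0)); auto.
      split; f_equal. unfold PP. rewrite (DD_move _ _ Hm), Hm. pose proof (ee_pos j0). lia.
    + apply p1_nomove; [lia|apply Hj; auto|].
      intros Hx. apply Ej. eapply mover_unique; eauto; lia.
  - split; [reflexivity|]. intros j Hjk. cbn [pos dst].
    replace (Z.of_nat (S t)) with (Z.of_nat t + 1) by lia.
    apply p1_nomove; [lia|apply Hj; auto|].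
    destruct (DD_even (Z.of_nat t) j ltac:(lia)) as [w Hw].
    assert (Od : Nat.odd (S t) = true) by (rewrite <- Nat.negb_even, Ev; reflexivity).
    apply Nat.odd_spec in Od. destruct Od as [u Hu]. lia.
Qed.

Lemma inv_run k t : (t <= 2 ^ k)%nat -> inv k t (run k t).
Proof.
  induction t as [|t IH]; intros H.
  - apply inv_init.
  - apply inv_step; [lia|]. apply IH; lia.
Qed.

Lemma disc_iff k t j : (t <= 2 ^ k)%nat -> (1 <= j <= k)%nat ->
  (discarded (run k t) j <-> NN k < DD (Z.of_nat t) j).
Proof.
  intros Ht Hj. destruct (inv_run k t Ht) as [_ H]. specialize (H j Hj).
  unfold predj, discarded in *.
  destruct (Z.ltb_spec (NN k) (DD (Z.of_nat t) j)); destruct H as [_ ->]; split; intros; try lia; auto; discriminate.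
Qed.
Close Scope Z_scope.

Theorem fact12 (k : nat) (hk : (2 <= k)%nat) :
  exists T : nat -> nat,
    (forall j : nat, (1 <= j <= k - 1)%nat ->
       (T j <= 2 ^ k)%nat /\ discarded (run k (T j)) j /\
       (forall t : nat, (t < T j)%nat -> ~ discarded (run k t) j)) /\
    (forall j : nat, (1 <= j)%nat -> (j + 1 <= k - 1)%nat -> (T (j + 1) < T j)%nat).
Proof.
  exists (fun j => (2 ^ k - 2 ^ j)%nat). split.
  - intros j Hj.
    assert (Hle : (2 ^ j <= 2 ^ k)%nat) by (apply Nat.pow_le_mono_r; lia).
    assert (HZ : Z.of_nat (2 ^ k - 2 ^ j) = (NN k - ee j)%Z).
    { rewrite Nat2Z.inj_sub by exact Hle. rewrite NN_nat. unfold ee. rewrite Nat2Z.inj_pow. reflexivity. }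
    destruct (ee_split j k ltac:(lia)) as [w Hw]. unfold NN in *. fold (ee k) in *.
    pose proof (ee_pos j).
    split; [lia|split].
    + apply disc_iff; [lia|lia|]. rewrite HZ.
      destruct (DD_bounds (NN k - ee j) j) as [q [H1 H2]]. unfold NN in *. fold (ee k) in *.
      rewrite Hw in H2. assert (q + 1 > w)%Z by nia. nia.
    + intros t Ht Hd. apply disc_iff in Hd; [|lia|lia].
      destruct (DD_bounds (Z.of_nat t) j) as [q [H1 H2]]. unfold NN in *. fold (ee k) in *.
      assert (Z.of_nat t < ee k - ee j)%Z by lia.
      rewrite Hw in *. assert (q < w)%Z by nia. nia.
  - intros j Hj Hjk.
    assert (Hle : (2 ^ (j+1) <= 2 ^ k)%nat) by (apply Nat.pow_le_mono_r; lia).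
    rewrite Nat.pow_add_r in *. simpl in *.
    assert (0 < 2 ^ j)%nat by (apply Nat.neq_0_lt_0, Nat.pow_nonzero; lia). lia.
Qed.
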